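(* Let $P$ be a finite set of points in $\mathbb{R}^2$ in general position. Let $(u,v)$ be adjacent vertices of the convex hull of $P$, let $t$ be the other neighbor of $u$ on the hull, and let $p\in A(u)\setminus A(v)$. If $v$ is deleted from $P$, and $v'$ denotes the new neighbor of $u$ on the convex hull of $P\setminus\{v\}$ (replacing $v$), then $p$ lies in the triangle $\triangle(t,u,v')$, i.e. $p$ remains within $u$'s triangle.
   Context: For consecutive hull vertices $(t,u,v)$, $u$'s triangle is $\triangle(t,u,v)$. Convex layers: $L^1$ is the set of vertices of the convex hull of $P$, $L^2$ the set of vertices of the convex hull of $P\setminus L^1$. A point $p$ is active for $u\in L^1$ if, upon deleting $u$ and recomputing the first and second convex layers, $p$ moves to the first layer; $A(u)$ is the set of points active for $u$. *)

(* Defs.v *)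
From mathcomp Require Import all_boot all_order all_algebra.
Set Implicit Arguments. Unset Strict Implicit. Unset Printing Implicit Defensive.
Import Order.TTheory GRing.Theory Num.Theory.
Local Open Scope ring_scope.

Definition pt (R : realFieldType) := (R * R)%type.

(* Orientation determinant of (a, b, c): > 0 iff counterclockwise. *)
Definition orient (R : realFieldType) (a b c : pt R) : R :=
  (b.1 - a.1) * (c.2 - a.2) - (b.2 - a.2) * (c.1 - a.1).

Definition general_position (R : realFieldType) (P : seq (pt R)) : Prop :=
  forall a b c, a \in P -> b \in P -> c \in P ->
    a <> b -> b <> c -> a <> c -> orient a b c != 0.

Definition in_conv (R : realFieldType) (A : pt R -> Prop) (p : pt R) : Prop :=
  exists s : seq (pt R), (forall q, q \in s -> A q) /\
  exists w : pt R -> R, (forall q, q \in s -> 0 <= w q) /\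
    \sum_(q <- s) w q = 1 /\
    \sum_(q <- s) w q * q.1 = p.1 /\
    \sum_(q <- s) w q * q.2 = p.2.

Definition hull_vertex (R : realFieldType) (S : pt R -> Prop) (x : pt R) : Prop :=
  S x /\ ~ in_conv (fun y => S y /\ y <> x) x.

Definition L1 (R : realFieldType) (S : pt R -> Prop) (x : pt R) : Prop :=
  hull_vertex S x.
Definition L2 (R : realFieldType) (S : pt R -> Prop) (x : pt R) : Prop :=
  hull_vertex (fun y => S y /\ ~ L1 S y) x.

Definition del (R : realFieldType) (S : pt R -> Prop) (u : pt R) : pt R -> Prop :=
  fun y => S y /\ y <> u.

Definition hull_edge (R : realFieldType) (S : pt R -> Prop) (a b : pt R) : Prop :=
  L1 S a /\ L1 S b /\ a <> b /\
  ((forall q, S q -> q <> a -> q <> b -> 0 < orient a b q) \/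
   (forall q, S q -> q <> a -> q <> b -> orient a b q < 0)).

(* p is active for u: p is on the second layer of S and, after deleting u,
   p is on the first layer.  A S u = set of active points for u. *)
Definition active (R : realFieldType) (S : pt R -> Prop) (u p : pt R) : Prop :=
  L2 S p /\ L1 (del S u) p.

Definition in_triangle (R : realFieldType) (a b c p : pt R) : Prop :=
  in_conv (fun y => y = a \/ y = b \/ y = c) p.

(* Main.v *)
Require Import Defs.
From mathcomp Require Import all_boot all_order all_algebra.
From mathcomp Require Import ring lra.
From Stdlib Require Import Classical.
Set Implicit Arguments. Unset Strict Implicit. Unset Printing Implicit Defensive.
Import Order.TTheory GRing.Theory Num.Theory.
Local Open Scope ring_scope.

Section Aux.
Variable R : realFieldType.

Lemma sum_sel (J : seq (pt R)) (x : pt R) (c : R) (F : pt R -> R) :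
  uniq J -> x \in J ->
  \sum_(q <- J) (if x == q then c else 0) * F q = c * F x.
Proof.
elim: J => [//|y J IH] /= /andP[yJ uJ]; rewrite in_cons big_cons.
have [exy|nxy] := eqVneq x y => /= xJ.
  subst y; rewrite big1_seq ?addr0 // => q /andP[_ qJ].
  have [e|ne] := eqVneq x q; last by rewrite mul0r.
  by subst q; rewrite qJ in yJ.
by rewrite mul0r add0r IH.
Qed.

Lemma sum_regroup (s : seq (pt R * R)) (J : seq (pt R)) (F : pt R -> R) :
  uniq J -> {subset map fst s <= J} ->
  \sum_(q <- J) (\sum_(x <- s | x.1 == q) x.2) * F q = \sum_(x <- s) x.2 * F x.1.
Proof.
move=> uJ; elim: s => [|x s IH] sub.
  by rewrite big_nil big1 // => q _; rewrite big_nil mul0r.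
rewrite big_cons -IH; last by move=> q qs; apply: sub; rewrite /= in_cons qs orbT.
have E : forall q, (if x.1 == q then x.2 + \sum_(y <- s | y.1 == q) y.2
                      else \sum_(y <- s | y.1 == q) y.2)
          = (if x.1 == q then x.2 else 0) + \sum_(y <- s | y.1 == q) y.2.
  by move=> q; case: ifP; rewrite ?add0r.
under eq_bigr => q _ do rewrite big_cons E mulrDl.
rewrite big_split /= sum_sel //; apply: sub; by rewrite /= in_cons eqxx.
Qed.

Lemma in_conv_pairs (A : pt R -> Prop) (p : pt R) (s : seq (pt R * R)) :
  (forall x, x \in s -> A x.1 /\ 0 <= x.2) ->
  \sum_(x <- s) x.2 = 1 ->
  \sum_(x <- s) x.2 * x.1.1 = p.1 ->
  \sum_(x <- s) x.2 * x.1.2 = p.2 -> in_conv A p.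
Proof.
move=> hs h1 hx hy.
exists (undup (map fst s)); split.
  move=> q; rewrite mem_undup => /mapP[x xs ->]; exact: (hs x xs).1.
exists (fun q => \sum_(x <- s | x.1 == q) x.2); split.
  move=> q _; rewrite big_seq_cond; apply: sumr_ge0 => x /andP[xs _]; exact: (hs x xs).2.
have sub : {subset map fst s <= undup (map fst s)} by move=> q; rewrite mem_undup.
split.
  rewrite -h1; have := sum_regroup (fun _ => 1) (undup_uniq _) sub.
  under eq_bigr => q _ do rewrite mulr1.
  by move=> ->; apply: eq_bigr => q _; rewrite mulr1.
split; first by rewrite -hx (sum_regroup (fun q => q.1) (undup_uniq _) sub).
by rewrite -hy (sum_regroup (fun q => q.2) (undup_uniq _) sub).
Qed.

Lemma sum_ge0_seq (I : eqType) (r : seq I) (F : I -> R) :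
  (forall q, q \in r -> 0 <= F q) -> 0 <= \sum_(q <- r) F q.
Proof. by move=> h; rewrite big_seq; apply: sumr_ge0. Qed.

Definition so (a b : pt R) (M Qx Qy : R) :=
  (b.1 - a.1) * (Qy - M * a.2) - (b.2 - a.2) * (Qx - M * a.1).

Lemma sumO (r : seq (pt R)) (w : pt R -> R) (a b : pt R) :
  \sum_(q <- r) w q * orient a b q =
  so a b (\sum_(q <- r) w q) (\sum_(q <- r) w q * q.1) (\sum_(q <- r) w q * q.2).
Proof.
rewrite /so /orient.
elim: r => [|x r IH]; first by rewrite !big_nil; ring.
rewrite !big_cons IH; ring.
Qed.
Lemma a_sym1 (t u v : pt R) : orient u v t = orient t u v.
Proof. rewrite /orient; ring. Qed.
Lemma a_sym2 (t v p : pt R) : orient t v p = - orient v t p.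
Proof. rewrite /orient; ring. Qed.
Lemma a_tri0 (t u v p : pt R) :
  orient u v p + orient v t p + orient t u p = orient t u v.
Proof. rewrite /orient; ring. Qed.
Lemma a_trix (t u v p : pt R) :
  orient u v p * t.1 + orient v t p * u.1 + orient t u p * v.1 = orient t u v * p.1.
Proof. rewrite /orient; ring. Qed.
Lemma a_triy (t u v p : pt R) :
  orient u v p * t.2 + orient v t p * u.2 + orient t u p * v.2 = orient t u v * p.2.
Proof. rewrite /orient; ring. Qed.
Lemma a_zero1 (a b : pt R) : orient a b b = 0.
Proof. rewrite /orient; ring. Qed.
Lemma a_zero2 (a b : pt R) : orient a b a = 0.
Proof. rewrite /orient; ring. Qed.

Lemma b_rel (t u v p : pt R) (l M Qx Qy : R) :
  l + M = 1 -> l * u.1 + Qx = p.1 -> l * u.2 + Qy = p.2 ->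
  [/\ so p v M Qx Qy = l * so u v M Qx Qy,
      so t p M Qx Qy = l * so t u M Qx Qy &
      so t v M Qx Qy = orient t v p + l * orient t u v].
Proof.
move=> hM hx hy.
have -> : M = 1 - l by rewrite -hM; ring.
have -> : Qx = p.1 - l * u.1 by rewrite -hx; ring.
have -> : Qy = p.2 - l * u.2 by rewrite -hy; ring.
by split; rewrite /so /orient; ring.
Qed.

Lemma c_rel (t v p : pt R) (M Qx Qy : R) :
  [/\ so p v M Qx Qy + so t p M Qx Qy + M * orient t v p = so t v M Qx Qy,
      t.1 * so p v M Qx Qy + v.1 * so t p M Qx Qy + orient t v p * Qx = p.1 * so t v M Qx Qy &
      t.2 * so p v M Qx Qy + v.2 * so t p M Qx Qy + orient t v p * Qy = p.2 * so t v M Qx Qy].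
Proof. by split; rewrite /so /orient; ring. Qed.

Lemma div_ge0' (a D F : R) : 0 <= a * D -> 0 < F * D -> 0 <= a / F.
Proof.
move=> ha hF.
have Dn : D != 0 by apply: contraTneq hF => ->; rewrite mulr0 ltxx.
have Fn : F != 0 by apply: contraTneq hF => ->; rewrite mul0r ltxx.
have -> : a / F = (a * D) / (F * D) by field; rewrite Dn Fn.
by rewrite divr_ge0 // ltW.
Qed.

Lemma comb1 (a b c F : R) : F != 0 -> a + b + c = F -> a/F + (b/F + (c/F)) = 1.
Proof. move=> h e; rewrite -e in h *; field; done. Qed.
Lemma comb3 (a b c x y z P F : R) : F != 0 -> a*x + b*y + c*z = F*P ->
  a/F*x + (b/F*y + c/F*z) = P.
Proof.
move=> h e; have -> : P = (a*x + b*y + c*z) / F by rewrite e; field.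
by field.
Qed.
Lemma comb2 (a b c x y z P F : R) : F != 0 -> x*a + y*b + c*z = P*F ->
  a/F*x + (b/F*y + z*(c/F)) = P.
Proof.
move=> h e; have -> : P = (x*a + y*b + c*z) / F by rewrite e; field.
by field.
Qed.
End Aux.

Unset Implicit Arguments.

Theorem lemma2 (R : realFieldType) (P : seq (pt R)) (t u v v' p : pt R) :
  uniq P ->
  general_position P ->
  hull_edge (fun x => x \in P) u v ->
  hull_edge (fun x => x \in P) t u ->
  t <> v ->
  active (fun x => x \in P) u p ->
  ~ active (fun x => x \in P) v p ->
  hull_edge (del (fun x => x \in P) v) u v' ->
  v' <> t ->
  in_triangle t u v' p.
Proof.
move=> _ _ [_ [L1v [uv _]]] [L1t [L1u [tu Htu]]] tv [L2p L1up] nact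
  [_ [L1v' [uv' Huv']]] v't.
have tP : t \in P := L1t.1.
have uP : u \in P := L1u.1.
have [v'P v'v] : v' \in P /\ v' <> v := L1v'.1.
have [[pP nL1p] _] := L2p.
have pu : p <> u by move=> e; apply: nL1p; rewrite e.
have hpt : p <> t by move=> e; apply: nL1p; rewrite e.
have pv : p <> v by move=> e; apply: nL1p; rewrite e.
have nL1vp : ~ L1 (del (fun x => x \in P) v) p by move=> h; apply: nact.
have pv' : p <> v' by move=> e; apply: nL1vp; rewrite e.
have hconv : in_conv (fun y => del (fun x => x \in P) v y /\ y <> p) p.
  by apply: NNPP => h; apply: nL1vp; split.
have nconv := L1up.2.
set D := orient t u v'.
have vu : v' <> u by move=> e; apply: uv'.
have H1 : forall q, q \in P -> q <> t -> q <> u -> 0 < orient t u q * D.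
  case: Htu => h q qP qt qu.
    by rewrite mulr_gt0 // ?h // /D h.
  by rewrite -mulrNN mulr_gt0 // oppr_gt0 ?h // /D h.
have tdel : del (fun x => x \in P) v t by [].
have H2 : forall q, q \in P -> q <> v -> q <> u -> q <> v' -> 0 < orient u v' q * D.
  rewrite /D -a_sym1.
  case: Huv' => h q qP qv qu qv'.
    by rewrite mulr_gt0 // h //; move=> e; apply: v't.
  by rewrite -mulrNN mulr_gt0 // oppr_gt0 h //; move=> e; apply: v't.
have Dn : D != 0.
  by have := H1 v' v'P v't vu; apply: contraTneq => ->; rewrite mulr0 ltxx.
have key : 0 <= orient v' t p * D.
  case: (lerP 0 (orient v' t p * D)) => // hneg; exfalso.
  case: hconv => s [hs [w [hw [h1 [hx hy]]]]].
  pose s0 := [seq q <- s | q != u].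
  pose l := \sum_(q <- s | q == u) w q.
  pose M := \sum_(q <- s0) w q.
  pose Qx := \sum_(q <- s0) w q * q.1.
  pose Qy := \sum_(q <- s0) w q * q.2.
  have hl : l + M = 1.
    by rewrite /M big_filter -h1 [RHS](bigID (fun q => q == u)) /=.
  have hlx : l * u.1 + Qx = p.1.
    rewrite /Qx big_filter -hx [RHS](bigID (fun q => q == u)) /=; congr (_ + _).
    by rewrite mulr_suml; apply: eq_bigr => q /eqP->.
  have hly : l * u.2 + Qy = p.2.
    rewrite /Qy big_filter -hy [RHS](bigID (fun q => q == u)) /=; congr (_ + _).
    by rewrite mulr_suml; apply: eq_bigr => q /eqP->.
  have l0 : 0 <= l.
    by rewrite /l big_seq_cond; apply: sumr_ge0 => q /andP[qs _]; exact: hw.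
  have G1 : 0 <= so t u M Qx Qy * D.
    rewrite -sumO mulr_suml; apply: sum_ge0_seq => q; rewrite mem_filter => /andP[/eqP qu qs].
    have [[qP qv] qp] := hs q qs.
    rewrite -mulrA mulr_ge0 ?hw //.
    have [->|qt] := eqVneq q t; first by rewrite a_zero2 mul0r.
    by apply/ltW/H1 => //; apply/eqP.
  have G2 : 0 <= so u v' M Qx Qy * D.
    rewrite -sumO mulr_suml; apply: sum_ge0_seq => q; rewrite mem_filter => /andP[/eqP qu qs].
    have [[qP qv] qp] := hs q qs.
    rewrite -mulrA mulr_ge0 ?hw //.
    have [->|qv'] := eqVneq q v'; first by rewrite a_zero1 mul0r.
    by apply/ltW/H2 => //; apply/eqP.
  have [E1 E2 EF] := @b_rel _ t u v' p l M Qx Qy hl hlx hly.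
  have [C0 Cx Cy] := @c_rel _ t v' p M Qx Qy.
  set Fv := so t v' M Qx Qy in EF C0 Cx Cy.
  have Op : 0 < orient t v' p * D by rewrite a_sym2 mulNr oppr_gt0.
  have FD : 0 < Fv * D.
    rewrite EF mulrDl -mulrA; apply: ltr_wpDr => //.
    by rewrite mulr_ge0 // -expr2 sqr_ge0.
  have Fn : Fv != 0 by apply: contraTneq FD => ->; rewrite mul0r ltxx.
  apply: nconv.
  apply: (in_conv_pairs (s := (t, so p v' M Qx Qy / Fv) :: (v', so t p M Qx Qy / Fv) ::
             [seq (q, w q * orient t v' p / Fv) | q <- s0])).
  - move=> x; rewrite !inE => /or3P[/eqP->|/eqP->|/mapP[q]] /=.
    + split; first by split; [split | move=> e; apply: hpt; rewrite e].
      by apply: (div_ge0' (D := D)) => //; rewrite E1 -mulrA mulr_ge0.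
    + split; first by split; [split | move=> e; apply: pv'; rewrite e].
      by apply: (div_ge0' (D := D)) => //; rewrite E2 -mulrA mulr_ge0.
    + rewrite mem_filter => /andP[/eqP qu qs] ->; have [[qP qv] qp] := hs q qs.
      split => //=; rewrite -mulrA mulr_ge0 ?hw //.
      exact: (div_ge0' (D := D)) (ltW Op) FD.
  - rewrite !big_cons big_map /= -!mulr_suml -/M; exact: comb1 Fn C0.
  - rewrite !big_cons big_map /=.
    rewrite (eq_bigr (fun j => w j * j.1 * (orient t v' p / Fv))); last by move=> j _; ring.
    rewrite -mulr_suml -/Qx; exact: comb2 Fn Cx.
  - rewrite !big_cons big_map /=.
    rewrite (eq_bigr (fun j => w j * j.2 * (orient t v' p / Fv))); last by move=> j _; ring.
    rewrite -mulr_suml -/Qy; exact: comb2 Fn Cy.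
apply: (in_conv_pairs (s := [:: (t, orient u v' p / D); (u, orient v' t p / D);
                              (v', orient t u p / D)])).
- move=> x; rewrite !inE => /or3P[/eqP->|/eqP->|/eqP->] /=.
  + split; first by left.
    apply: (div_ge0' (D := D)); first exact/ltW/H2.
    by rewrite -expr2 lt0r sqr_ge0 sqrf_eq0 Dn.
  + split; first by right; left.
    apply: (div_ge0' (D := D)) => //.
    by rewrite -expr2 lt0r sqr_ge0 sqrf_eq0 Dn.
  + split; first by right; right.
    apply: (div_ge0' (D := D)); first exact/ltW/H1.
    by rewrite -expr2 lt0r sqr_ge0 sqrf_eq0 Dn.
- rewrite !big_cons big_nil /= addr0; exact: (comb1 Dn (a_tri0 t u v' p)).
- rewrite !big_cons big_nil /= addr0; exact: (comb3 Dn (a_trix t u v' p)).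
- rewrite !big_cons big_nil /= addr0; exact: (comb3 Dn (a_triy t u v' p)).
Qed.
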